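(* Let $n\geq 2$ and let $N$ be any integer. The matrix ring $\mathrm{Mat}_n(\mathbb{Z}/N\mathbb{Z})$ has the presentation (as a unital associative ring) $$\mathrm{Mat}_n(\mathbb{Z}/N\mathbb{Z})\cong\langle x,y \mid x^n=0,\ y^n=0,\ xy+(N+1)y^{n-1}x^{n-1}=1\rangle.$$
   Context: All rings are associative with unit, and presentations are taken in the category of unital associative rings: the right-hand side is the quotient of the free ring $\mathbb{Z}\langle x,y\rangle$ by the two-sided ideal generated by $x^n$, $y^n$ and $xy+(N+1)y^{n-1}x^{n-1}-1$. *)

(* Defs.v *)
From HB Require Import structures.
From mathcomp Require Import all_boot all_order all_algebra.
Set Implicit Arguments. Unset Strict Implicit. Unset Printing Implicit Defensive.
Import Order.TTheory GRing.Theory Num.Theory.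
Local Open Scope ring_scope.

Definition zero_ring_carrier := unit.
HB.instance Definition _ := Choice.on zero_ring_carrier.
Lemma zr_assoc : associative (fun _ _ : zero_ring_carrier => tt). Proof. by []. Qed.
Lemma zr_comm : commutative (fun _ _ : zero_ring_carrier => tt). Proof. by []. Qed.
Lemma zr_lid : left_id tt (fun _ _ : zero_ring_carrier => tt). Proof. by case. Qed.
Lemma zr_rid : right_id tt (fun _ _ : zero_ring_carrier => tt). Proof. by case. Qed.
Lemma zr_linv : left_inverse tt (fun _ : zero_ring_carrier => tt) (fun _ _ => tt). Proof. by []. Qed.
Lemma zr_ldist : left_distributive (fun _ _ : zero_ring_carrier => tt) (fun _ _ => tt). Proof. by []. Qed.
Lemma zr_rdist : right_distributive (fun _ _ : zero_ring_carrier => tt) (fun _ _ => tt). Proof. by []. Qed.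
HB.instance Definition _ := GRing.isPzRing.Build zero_ring_carrier
  zr_assoc zr_comm zr_lid zr_linv zr_assoc zr_lid zr_rid zr_ldist zr_rdist.

Definition ZmodN (N : int) : pzRingType :=
  match `|N|%N with
  | 0%N => int
  | 1%N => zero_ring_carrier
  | m.+2 => 'Z_m.+2
  end.

Definition pres_rel (R : pzRingType) (n : nat) (N : int) (x y : R) : Prop :=
  [/\ x ^+ n = 0, y ^+ n = 0 &
      x * y + (N + 1)%:~R * (y ^+ n.-1 * x ^+ n.-1) = 1].

(* Main.v *)
Require Import Defs.
From HB Require Import structures.
From mathcomp Require Import all_boot all_order all_algebra.
From mathcomp Require Import zify.
Import GRing.Theory.
Local Open Scope ring_scope.

Section Core.
Variables (R : pzRingType) (n : nat) (N : int) (x y : R).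
Hypothesis n2 : (2 <= n)%N.
Hypothesis Hx : x ^+ n = 0.
Hypothesis Hy : y ^+ n = 0.
Let c : R := (N + 1)%:~R.
Let e := y ^+ n.-1 * x ^+ n.-1.
Hypothesis Hr : x * y + c * e = 1.
Let f := 1 - x * y.
Let g := 1 - y * x.

Lemma nS : n = n.-1.+1. Proof. by case: n n2. Qed.

Lemma ex : e * x = 0.
Proof. by rewrite /e -mulrA -exprSr -nS Hx mulr0. Qed.
Lemma ye : y * e = 0.
Proof. by rewrite /e mulrA -exprS -nS Hy mul0r. Qed.
Lemma fce : f = c * e.
Proof. by rewrite /f -Hr addrC addKr. Qed.
Lemma fx : f * x = 0.
Proof.
have -> : f * x = c * (e * x) by rewrite fce mulrA.
by rewrite ex mulr0.
Qed.
Lemma yf : y * f = 0.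
Proof. by rewrite fce mulrA /c commr_int -mulrA ye mulr0. Qed.
Lemma xyx : x * y * x = x.
Proof. by move: fx; rewrite /f mulrBl mul1r => /eqP; rewrite subr_eq0 => /eqP <-. Qed.
Lemma yxy : y * x * y = y.
Proof. by move: yf; rewrite /f mulrBr mulr1 mulrA => /eqP; rewrite subr_eq0 => /eqP <-. Qed.
Lemma xg : x * g = 0.
Proof. by rewrite /g mulrBr mulr1 mulrA xyx subrr. Qed.
Lemma gy : g * y = 0.
Proof. by rewrite /g mulrBl mul1r yxy subrr. Qed.
Lemma ff : f * f = f.
Proof. by rewrite {2}/f mulrBr mulr1 mulrA fx mul0r subr0. Qed.

Lemma yexp0 a : (n <= a)%N -> y ^+ a = 0.
Proof. by move=> h; rewrite -(subnK h) exprD Hy mulr0. Qed.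

Lemma Lg a : forall m, (a < m)%N -> x ^+ m * y ^+ a * g = 0.
Proof.
elim: a => [|a IH] [|m] //= h.
  by rewrite expr0 mulr1 exprSr -mulrA xg mulr0.
case: (leqP n a.+1) => ha; first by rewrite yexp0 // mulr0 mul0r.
have -> : x ^+ m.+1 * y ^+ a.+1 * g = x ^+ m * (x * y) * y ^+ a * g by rewrite exprSr exprS !mulrA.
have -> : x * y = 1 - f by rewrite /f opprB addrC subrK.
rewrite [x ^+ m * (1 - f)]mulrBr mulr1 [(_ - _) * y ^+ a]mulrBl [(_ - _) * g]mulrBl (IH m h) sub0r.
have -> : x ^+ m * f * y ^+ a * g = x ^+ m * (c * (y ^+ n.-1 * (x ^+ n.-1 * y ^+ a * g))).
  by rewrite fce /e !mulrA.
rewrite IH ?mulr0 ?oppr0 //.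
by rewrite -ltnS -nS.
Qed.

Lemma Dg a : (a < n.-1)%N -> f * y ^+ a * g = 0.
Proof.
move=> h; rewrite fce /e.
have -> : c * (y ^+ n.-1 * x ^+ n.-1) * y ^+ a * g = c * y ^+ n.-1 * (x ^+ n.-1 * y ^+ a * g) by rewrite !mulrA.
by rewrite Lg // mulr0.
Qed.

Lemma Mu j : forall i, (j < n)%N -> f * y ^+ j * x ^+ i * f = if i == j then f else 0.
Proof.
elim: j => [|j IH] [|i] h /=.
- by rewrite !expr0 !mulr1 ff.
- by rewrite expr0 mulr1 exprS mulrA fx mul0r mul0r.
- by rewrite expr0 mulr1 exprSr -!mulrA yf !mulr0.
rewrite exprSr exprS.
have -> : f * (y ^+ j * y) * (x * x ^+ i) * f = f * y ^+ j * (y * x) * x ^+ i * f by rewrite !mulrA.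
have -> : y * x = 1 - g by rewrite /g opprB addrC subrK.
rewrite [f * y ^+ j * (1 - g)]mulrBr mulr1 [(_ - _) * x ^+ i]mulrBl [(_ - _) * f]mulrBl (IH i (ltnW h)) eqSS.
rewrite Dg ?mul0r ?subr0 //.
by rewrite -ltnS -nS.
Qed.

Lemma fe : f = e.
Proof.
have h : (n.-1 < n)%N by rewrite {2}nS.
have := @Mu n.-1 n.-1 h; rewrite eqxx => <-.
have -> : f * y ^+ n.-1 * x ^+ n.-1 * f = f * e * f by rewrite /e !mulrA.
have ef : e * f = e by rewrite /f mulrBr mulr1 mulrA ex mul0r subr0.
have fe' : f * e = e by rewrite /f mulrBl mul1r -mulrA ye mulr0 subr0.
by rewrite fe' ef.
Qed.

Lemma Nf : N%:~R * f = 0.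
Proof.
have := fce; rewrite {1}fe /c rmorphD /= rmorph1 mulrDl mul1r -fe.
by move/eqP; rewrite -subr_eq subrr eq_sym => /eqP.
Qed.

Lemma sum1 : \sum_(i < n) x ^+ i * f * y ^+ i = 1.
Proof.
rewrite -(big_mkord xpredT (fun i => x ^+ i * f * y ^+ i)).
rewrite (@telescope_sumr_eq _ 0%N n (fun i => - (x ^+ i * y ^+ i))) //.
  by rewrite Hx mul0r oppr0 sub0r opprK !expr0 mulr1.
move=> k _; rewrite opprK addrC /f mulrBr mulr1 mulrBl.
by rewrite exprSr exprS !mulrA.
Qed.

Lemma NR : (N%:~R : R) = 0.
Proof.
transitivity (N%:~R * \sum_(i < n) x ^+ i * f * y ^+ i); first by rewrite sum1 mulr1.
rewrite mulr_sumr big1 // => i _.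
by rewrite !mulrA -(commr_int (x ^+ i)) -[x ^+ i * _ * f]mulrA Nf mulr0 mul0r.
Qed.

Definition u i j := x ^+ i * f * y ^+ j.

Lemma uu i j k l : (j < n)%N -> u i j * u k l = if k == j then u i l else 0.
Proof.
move=> h; rewrite /u.
have -> : x ^+ i * f * y ^+ j * (x ^+ k * f * y ^+ l) = x ^+ i * (f * y ^+ j * x ^+ k * f) * y ^+ l by rewrite !mulrA.
by rewrite Mu //; case: eqP => _; rewrite ?mulrA ?mulr0 ?mul0r.
Qed.

End Core.


Section Mx.
Variables (S : pzRingType) (p : nat).
Local Notation n := p.+1.

Definition Xm : 'M[S]_n := \matrix_(i, j) ((i : nat) == j.+1)%:R.
Definition Ym : 'M[S]_n := \matrix_(i, j) ((j : nat) == i.+1)%:R.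

Lemma sumX (G : 'I_n -> S) (r a : nat) : (r < n)%N ->
  \sum_(l < n) G l *+ (r == (l : nat) + a)%N = if (a <= r)%N then G (inord (r - a)) else 0.
Proof.
move=> hr; case: leqP => ha.
  rewrite (bigD1 (inord (r - a))) //= inordK; last by lia.
  rewrite subnK // eqxx mulr1n big1 ?addr0 // => l hl.
  case: eqP => h; last by rewrite mulr0n.
  by move: hl; rewrite h addnK inord_val eqxx.
rewrite big1 // => l _; case: eqP => h; last by rewrite mulr0n.
by lia.
Qed.

Lemma sumD (G : 'I_n -> S) (m : nat) :
  \sum_(l < n) G l *+ ((l : nat) == m) = if (m < n)%N then G (inord m) else 0.
Proof.
case: ltnP => hm.
  rewrite (bigD1 (inord m)) //= inordK // eqxx mulr1n big1 ?addr0 // => l hl.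
  case: eqP => h; last by rewrite mulr0n.
  by move: hl; rewrite -h inord_val eqxx.
rewrite big1 // => l _; case: eqP => h; last by rewrite mulr0n.
by have := ltn_ord l; lia.
Qed.

Lemma natbE (b1 b2 : bool) : (b1 <-> b2) -> (b1%:R : S) = b2%:R.
Proof. by case: b1; case: b2 => // -[h1 h2]; [have := h1 isT | have := h2 isT]. Qed.
Lemma natb0 (b : bool) : ~~ b -> (b%:R : S) = 0.
Proof. by case: b. Qed.

Lemma entM (A B : 'M[S]_n) i j : (A * B) i j = \sum_(l < n) A i l * B l j.
Proof. by rewrite -mulmxE mxE. Qed.

Lemma Xpow k : Xm ^+ k = \matrix_(i, j) ((i : nat) == j + k)%N%:R.
Proof.
elim: k => [|k IH].
  by rewrite expr0; apply/matrixP => i j; rewrite !mxE addn0.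
apply/matrixP => i j; rewrite exprSr entM mxE.
under eq_bigr => l _ do rewrite IH !mxE mulr_natl.
rewrite sumX //; case: leqP => h.
  have hi := ltn_ord i; have hj := ltn_ord j.
  by rewrite inordK; [apply: natbE; split => /eqP ?; apply/eqP; lia | lia].
by rewrite natb0 //; apply/eqP; lia.
Qed.

Lemma Ypow k : Ym ^+ k = \matrix_(i, j) ((j : nat) == i + k)%N%:R.
Proof.
elim: k => [|k IH].
  by rewrite expr0; apply/matrixP => i j; rewrite !mxE addn0 eq_sym.
apply/matrixP => i j; rewrite exprS entM mxE.
under eq_bigr => l _ do rewrite IH !mxE mulr_natl.
have hi := ltn_ord i; have hj := ltn_ord j.
rewrite sumD; case: ltnP => h.
  by rewrite inordK //; apply: natbE; split => /eqP ?; apply/eqP; lia.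
by rewrite natb0 //; apply/eqP; lia.
Qed.

Lemma Xn : Xm ^+ n = 0.
Proof.
by rewrite Xpow; apply/matrixP => i j; rewrite !mxE natb0 //; apply/eqP; have := ltn_ord i; lia.
Qed.
Lemma Yn : Ym ^+ n = 0.
Proof.
by rewrite Ypow; apply/matrixP => i j; rewrite !mxE natb0 //; apply/eqP; have := ltn_ord j; lia.
Qed.

Lemma XYe i j : (Xm * Ym) i j = ((0 < (i : nat))%N && ((i : nat) == j))%:R.
Proof.
have hi := ltn_ord i; have hj := ltn_ord j.
rewrite entM.
under eq_bigr => l _ do rewrite !mxE mulr_natl -[(l : nat).+1]addn1.
rewrite sumX //; case: (leqP 1 i) => h /=.
  rewrite inordK; last by lia.
  by apply: natbE; split => /eqP ?; apply/eqP; lia.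
by [].
Qed.

Lemma YXe i j : (Ym ^+ p * Xm ^+ p) i j = (((i : nat) == 0) && ((j : nat) == 0))%:R.
Proof.
have hi := ltn_ord i; have hj := ltn_ord j.
rewrite entM Ypow Xpow.
under eq_bigr => l _ do rewrite !mxE mulr_natr.
rewrite sumD; case: ltnP => h.
  by rewrite inordK //; apply: natbE; split => [/eqP ?|/andP[/eqP ? /eqP ?]]; [apply/andP; split; apply/eqP; lia | apply/eqP; lia].
by rewrite natb0 //; apply/negP => /andP[_ /eqP ?]; lia.
Qed.

Lemma mulXl a (M : 'M[S]_n) r s :
  (Xm ^+ a * M) r s = if (a <= r)%N then M (inord (r - a)) s else 0.
Proof.
rewrite entM Xpow.
under eq_bigr => l _ do rewrite !mxE mulr_natl.
by rewrite sumX.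
Qed.

Lemma mulYr b (M : 'M[S]_n) r s :
  (M * Ym ^+ b) r s = if (b <= s)%N then M r (inord (s - b)) else 0.
Proof.
rewrite entM Ypow.
under eq_bigr => l _ do rewrite !mxE mulr_natr.
by rewrite sumX.
Qed.

Lemma fM : 1 - Xm * Ym = delta_mx 0 0.
Proof.
apply/matrixP => i j; rewrite mxE [(- (Xm * Ym)) i j]mxE XYe !mxE.
have -> : (i == j) = ((i : nat) == j) by [].
have -> : (i == 0) = ((i : nat) == 0%N) by [].
have -> : (j == 0) = ((j : nat) == 0%N) by [].
case: (i : nat) => [|i']; case: (j : nat) => [|j'] /=.
- by rewrite subr0.
- by rewrite subr0.
- by rewrite subrr.
- by rewrite subrr.
Qed.

Lemma unitM (a b : 'I_n) : Xm ^+ a * (1 - Xm * Ym) * Ym ^+ b = delta_mx a b.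
Proof.
rewrite fM; apply/matrixP => r s.
have hr := ltn_ord r; have hs := ltn_ord s; have ha := ltn_ord a; have hb := ltn_ord b.
rewrite mulYr; case: (leqP b s) => h1; rewrite ?mulXl; [case: (leqP a r) => h2|]; rewrite !mxE.
- apply: natbE; rewrite -!(inj_eq val_inj) /= !inordK; try lia.
- symmetry; apply: natb0; apply/negP => /andP[/eqP e1 _]; move: h2; rewrite e1; lia.
- symmetry; apply: natb0; apply/negP => /andP[_ /eqP e2]; move: h1; rewrite e2; lia.
Qed.

End Mx.


Section Morph.
Variables (S : pzRingType) (N : int) (rep : S -> int).
Hypothesis Hrep : forall z, (rep z)%:~R = z.
Hypothesis Hker : forall k : int, (k%:~R : S) = 0 -> (N %| k)%Z.
Variables (R : pzRingType) (n : nat) (x y : R).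
Hypothesis n2 : (1 < n)%N.
Hypothesis Hx : x ^+ n = 0.
Hypothesis Hy : y ^+ n = 0.
Hypothesis Hr : x * y + (N + 1)%:~R * (y ^+ n.-1 * x ^+ n.-1) = 1.

Definition iota (z : S) : R := (rep z)%:~R.

Lemma cong k : (k%:~R : S) = 0 -> (k%:~R : R) = 0.
Proof. by move/Hker/dvdzP => [q ->]; rewrite intrM (@NR R n N x y n2 Hx Hy Hr) mulr0. Qed.

Lemma cong2 k l : (k%:~R : S) = l%:~R -> (k%:~R : R) = l%:~R.
Proof.
move=> h; apply/eqP; rewrite -subr_eq0 -intrB; apply/eqP/cong.
by rewrite intrB h subrr.
Qed.

Lemma iota_int k : iota (k%:~R) = k%:~R.
Proof. by apply: cong2; rewrite Hrep. Qed.

Lemma iota0 : iota 0 = 0.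
Proof. by have := iota_int 0; rewrite !mulr0z. Qed.
Lemma iota1 : iota 1 = 1.
Proof. by have := iota_int 1; rewrite !mulr1z. Qed.
Lemma iotaD a b : iota (a + b) = iota a + iota b.
Proof. by rewrite /iota -intrD; apply: cong2; rewrite intrD !Hrep. Qed.
Lemma iotaM a b : iota (a * b) = iota a * iota b.
Proof. by rewrite /iota -intrM; apply: cong2; rewrite intrM !Hrep. Qed.
Lemma iota_sum I r (P : pred I) (F : I -> S) :
  iota (\sum_(i <- r | P i) F i) = \sum_(i <- r | P i) iota (F i).
Proof. exact: (big_morph _ iotaD iota0). Qed.
Lemma iota_nat (b : bool) : iota b%:R = b%:R.
Proof. by have := iota_int b; rewrite -!pmulrn. Qed.

Definition phi (A : 'M[S]_n) : R :=
  \sum_(i < n) \sum_(j < n) iota (A i j) * u R x y i j.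

Lemma phi_nmod : GRing.nmod_morphism phi.
Proof.
split.
  by rewrite /phi big1 // => i _; rewrite big1 // => j _; rewrite mxE iota0 mul0r.
move=> A B; rewrite /phi -big_split; apply: eq_bigr => i _.
rewrite -big_split; apply: eq_bigr => j _.
by rewrite mxE iotaD mulrDl.
Qed.

Lemma uuR i j k l : (j < n)%N -> u R x y i j * u R x y k l = if k == j then u R x y i l else 0.
Proof. exact: (@uu R n N x y n2 Hx Hy Hr). Qed.

Lemma phi1 : phi 1 = 1.
Proof.
rewrite /phi -[RHS](@sum1 R n x y Hx); apply: eq_bigr => i _.
rewrite (bigD1 i) //= big1 ?addr0.
  by rewrite mxE eqxx iota_nat mul1r.
by move=> j hj; rewrite mxE iota_nat eq_sym (negbTE hj) mul0r.
Qed.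

Lemma swapM (a b : int) (u1 u2 : R) : a%:~R * u1 * (b%:~R * u2) = a%:~R * b%:~R * (u1 * u2).
Proof. by rewrite -mulrA [u1 * _]mulrA commr_int !mulrA. Qed.

Lemma phiM A B : phi (A * B) = phi A * phi B.
Proof.
rewrite /phi mulr_suml; apply: eq_bigr => i _.
rewrite mulr_suml.
transitivity (\sum_(l < n) \sum_(j < n) iota (A i j) * iota (B j l) * u R x y i l).
  apply: eq_bigr => l _; rewrite -mulmxE mxE iota_sum mulr_suml.
  by apply: eq_bigr => j _; rewrite iotaM.
rewrite exchange_big; apply: eq_bigr => j _.
rewrite mulr_sumr [RHS](bigD1 j) //= [X in _ = _ + X]big1 ?addr0.
  rewrite mulr_sumr; apply: eq_bigr => l _.
  by rewrite /iota swapM uuR ?eqxx ?ltn_ord.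
move=> k hk; rewrite mulr_sumr big1 // => l _.
have hk' : (k : nat) != j by [].
by rewrite /iota swapM uuR ?ltn_ord // (negbTE hk') !mulr0.
Qed.

End Morph.


Lemma presM (S : pzRingType) (N : int) (p : nat) : (0 < p)%N -> (N%:~R : S) = 0 ->
  pres_rel p.+1 N (Xm S p) (Ym S p).
Proof.
move=> hp HN; split; [exact: Xn | exact: Yn |] => /=.
have -> : ((N + 1)%:~R : 'M[S]_p.+1) = 1.
  by rewrite intrD -(rmorph_int (@scalar_mx S p.+1)) HN raddf0 add0r.
rewrite mul1r; apply/matrixP => i j.
rewrite mxE XYe YXe !mxE.
have -> : (i == j) = ((i : nat) == j) by [].
case: (i : nat) => [|i']; case: (j : nat) => [|j'] /=.
- by rewrite add0r.
- by rewrite addr0.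
- by rewrite addr0.
- by rewrite addr0.
Qed.

Lemma decompA (S : pzRingType) (rep : S -> int) (Hrep : forall z, (rep z)%:~R = z) p (A : 'M[S]_p.+1) :
  A = \sum_(i < p.+1) \sum_(j < p.+1) (rep (A i j))%:~R * (Xm S p ^+ i * (1 - Xm S p * Ym S p) * Ym S p ^+ j).
Proof.
rewrite {1}(matrix_sum_delta A); apply: eq_bigr => i _; apply: eq_bigr => j _.
by rewrite unitM -(rmorph_int (@scalar_mx S p.+1)) Hrep -mulmxE mul_scalar_mx.
Qed.

Lemma main (S : pzRingType) (N : int) (rep : S -> int)
  (Hrep : forall z, (rep z)%:~R = z)
  (Hker : forall k : int, (k%:~R : S) = 0 -> (N %| k)%Z)
  (HN : (N%:~R : S) = 0) (n : nat) : (2 <= n)%N ->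
  exists X Y : 'M[S]_n,
    pres_rel n N X Y /\
    forall (R : pzRingType) (a b : R), pres_rel n N a b ->
      exists f : {rmorphism 'M[S]_n -> R},
        [/\ f X = a, f Y = b &
            forall g : {rmorphism 'M[S]_n -> R},
              g X = a -> g Y = b -> forall A, g A = f A].
Proof.
case: n => [|p] // hp.
exists (Xm S p), (Ym S p); split; first by apply: presM => //; lia.
move=> R a b [Ha Hb Hr].
pose phiaM := GRing.isNmodMorphism.Build _ _ (phi S rep R p.+1 a b) (@phi_nmod S N rep Hrep Hker R p.+1 a b hp Ha Hb Hr).
pose phimM := GRing.isMonoidMorphism.Build _ _ (phi S rep R p.+1 a b)
   (@phi1 S N rep Hrep Hker R p.+1 a b hp Ha Hb Hr, @phiM S N rep Hrep Hker R p.+1 a b hp Ha Hb Hr).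
pose phiRM : {rmorphism 'M[S]_p.+1 -> R} := HB.pack (phi S rep R p.+1 a b) phiaM phimM.
have uuR := @uu R p.+1 N a b hp Ha Hb Hr.
have s1 := @sum1 R p.+1 a b Ha.
exists phiRM; split.
- rewrite /= /phi.
  have s1' : \sum_(i < p.+1) u R a b i i = 1 := s1.
  transitivity ((\sum_(i < p.+1) u R a b i i) * (a * \sum_(j < p.+1) u R a b j j)); last first.
    by rewrite s1' mul1r mulr1.
  rewrite mulr_sumr mulr_suml; apply: eq_bigr => i _.
  rewrite mulr_sumr; apply: eq_bigr => j _.
  have -> : a * u R a b j j = u R a b j.+1 j by rewrite /u !mulrA -exprS.
  rewrite uuR ?ltn_ord // mxE (@iota_nat S N rep Hrep Hker R p.+1 a b hp Ha Hb Hr).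
  by rewrite eq_sym; case: eqP => _; rewrite ?mulr1n ?mulr0n ?mul1r ?mul0r.
- rewrite /= /phi.
  have s1' : \sum_(i < p.+1) u R a b i i = 1 := s1.
  transitivity ((\sum_(i < p.+1) u R a b i i * b) * (\sum_(j < p.+1) u R a b j j)); last first.
    by rewrite -mulr_suml s1' mul1r mulr1.
  rewrite mulr_suml; apply: eq_bigr => i _.
  rewrite mulr_sumr; apply: eq_bigr => j _.
  have -> : u R a b i i * b = u R a b i i.+1 by rewrite /u -!mulrA -exprSr.
  rewrite mxE (@iota_nat S N rep Hrep Hker R p.+1 a b hp Ha Hb Hr).
  case: (ltnP i.+1 p.+1) => hi.
    rewrite uuR //.
    by case: eqP => _; rewrite ?mulr1n ?mulr0n ?mul1r ?mul0r.
  have hb0 : b ^+ i.+1 = 0.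
    have hi' : i.+1 = p.+1 by have := ltn_ord i; lia.
    by rewrite hi' Hb.
  rewrite /u hb0 !mulr0 mul0r.
  by case: eqP => h; [have := ltn_ord j; have := ltn_ord i; lia | rewrite mulr0n mul0r].

move=> g gX gY A.
rewrite /= /phi {1}(@decompA S rep Hrep p A) rmorph_sum; apply: eq_bigr => i _.
rewrite rmorph_sum; apply: eq_bigr => j _.
by rewrite !rmorphM rmorph_int !rmorphXn rmorphB rmorph1 rmorphM gX gY.
Qed.


Lemma ker_Zp m (N : int) : `|N|%N = m.+2 -> forall k : int, (k%:~R : 'Z_m.+2) = 0 -> (N %| k)%Z.
Proof.
move=> hN k; rewrite /dvdz hN.
have key a : (a%:R : 'Z_m.+2) = 0 -> (m.+2 %| a)%N.
  move=> h; have := val_Zp_nat (isT : 1 < m.+2)%N a; rewrite h /= => h0.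
  by rewrite /dvdn -h0.
case: k => a.
  by rewrite -pmulrn => /key.
by rewrite NegzE mulrNz -pmulrn => /eqP; rewrite oppr_eq0 => /eqP /key.
Qed.

Lemma HN_Zp m (N : int) : `|N|%N = m.+2 -> (N%:~R : 'Z_m.+2) = 0.
Proof.
move=> hN; case: N hN => a /= hN.
  by rewrite -pmulrn hN pchar_Zp.
by rewrite NegzE mulrNz -pmulrn hN pchar_Zp ?oppr0.
Qed.

Theorem theorem2 (n : nat) (N : int) : (2 <= n)%N ->
  exists X Y : 'M[ZmodN N]_n,
    pres_rel n N X Y /\
    forall (R : pzRingType) (a b : R), pres_rel n N a b ->
      exists f : {rmorphism 'M[ZmodN N]_n -> R},
        [/\ f X = a, f Y = b &
            forall g : {rmorphism 'M[ZmodN N]_n -> R},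
              g X = a -> g Y = b -> forall A, g A = f A].
Proof.
rewrite /ZmodN; case E: `|N|%N => [|[|m]].
- have N0 : N = 0 by apply/eqP; rewrite -absz_eq0 E.
  apply: (@main int N (fun z => z)) => [z|k|]; first exact: intz.
    by rewrite intz => ->; exact: dvdz0.
  by rewrite N0.
- apply: (@main zero_ring_carrier N (fun _ => 0)) => [z|k _|].
    by case: z; case: (_ %:~R).
    by rewrite unfold_in /= E dvd1n.
  by case: (_ %:~R).
- apply: (@main 'Z_m.+2 N (fun z => (val z)%:Z)) => [z|k|].
    by rewrite -pmulrn natr_Zp.
    exact: ker_Zp.
  exact: HN_Zp.
Qed.
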